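(* Let $K$ be an algebraically closed field of characteristic three, and let $C_3^2 = C_3\times C_3$. For any injective group homomorphism $\iota\colon C_3^2\to \mathrm{SL}(3,K)$ whose image is small, there exist $a\in K\setminus\mathbb F_3$ and $b\in K$ such that $\sigma(U(a,b))$ is conjugate in $\mathrm{GL}(3,K)$ to $\iota(C_3^2)$. Here $U(a,b)$ is the subgroup of the additive group $(K^2,+)$ generated by $(1,0)$ and $(a,b)$, and $\sigma\colon (K^2,+)\to \mathrm{SL}(3,K)$ is the group homomorphism $$\sigma(c_1,c_2)=\begin{pmatrix}1&-c_1&c_1^2+c_2\\0&1&c_1\\0&0&1\end{pmatrix}.$$
   Context: A subgroup $G\subset\mathrm{GL}(n,K)$ acts on $K^n$; an element $g\in G$ is a pseudo-reflection if its fixed subspace $(K^n)^g$ has dimension $n-1$. The group $G$ is called small if it contains no pseudo-reflection. $\mathbb F_3\subset K$ denotes the prime field. *)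

(* Defs.v *)
From HB Require Import structures.
From mathcomp Require Import all_boot all_order all_algebra.
Set Implicit Arguments. Unset Strict Implicit. Unset Printing Implicit Defensive.
Import GRing.Theory.
Local Open Scope ring_scope.

Definition fixdim (K : fieldType) (n : nat) (g : 'M[K]_n) : nat :=
  \rank (kermx (g - 1%:M)).

Definition pseudo_reflection (K : fieldType) (n : nat) (g : 'M[K]_n) : bool :=
  fixdim g == n.-1.

Definition small (K : fieldType) (n : nat) (G : 'M[K]_n -> Prop) : Prop :=
  forall g, G g -> ~~ pseudo_reflection g.

Definition in_prime_field (K : fieldType) (a : K) : Prop :=
  exists z : int, a = z%:~R.

Definition U_ab (K : fieldType) (a b : K) (c : K * K) : Prop :=
  exists i j : int, c = (((1 : K), (0 : K)) *~ i + (a, b) *~ j)%R.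

Definition sigma (K : fieldType) (c : K * K) : 'M[K]_3 :=
  \matrix_(i < 3, j < 3)
    nth 0 (nth [::] [:: [:: 1; - c.1; c.1 ^+ 2 + c.2];
                        [:: 0; 1; c.1];
                        [:: 0; 0; 1]] i) j.

(* Main.v *)
Require Import Defs.
From HB Require Import structures.
From mathcomp Require Import all_boot all_order all_algebra ring zify.
Import GRing.Theory.
Local Open Scope ring_scope.

Section S.
Variable K : fieldType.
Hypothesis hK : (3 \in [pchar K])%N.

Definition N0 : 'M[K]_3 := sigma ((1 : K), (0 : K)) - 1.

Lemma cube_sub1 (g : 'M[K]_3) : (g - 1)^+3 = g^+3 - 1.
Proof.
have h3M : (3 \in [pchar 'M[K]_3])%N by rewrite pchar_lalg.
have := pFrobenius_autB_comm h3M (commr1 g).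
by rewrite !pFrobenius_autE expr1n.
Qed.

Definition i1 : 'I_3 := @Ordinal 3 1 isT.
Definition i2 : 'I_3 := @Ordinal 3 2 isT.
Lemma w30 : widen_ord (leqnSn 2) (widen_ord (leqnSn 1) (@ord_max 0)) = ord0 :> 'I_3.
Proof. exact: val_inj. Qed.
Lemma w31 : widen_ord (leqnSn 2) (@ord_max 1) = i1.
Proof. exact: val_inj. Qed.
Lemma w32 : (@ord_max 2) = i2.
Proof. exact: val_inj. Qed.

Lemma jordan (N : 'M[K]_3) : N ^+ 3 = 0 -> N ^+ 2 != 0 ->
  exists2 Q : 'M[K]_3, Q \in unitmx & Q *m N = N0 *m Q.
Proof.
move=> N3 N2.
have [v Hv] : exists v : 'rV[K]_3, v *m N ^+ 2 != 0.
  case: (pickP (fun i : 'I_3 => row i (N ^+ 2) != 0)) => [i Hi|H].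
    by exists (delta_mx 0 i); rewrite -rowE.
  move/negP: N2; case; apply/eqP/row_matrixP => i; rewrite row0.
  by move: (H i) => /= /negbFE /eqP.
have NN : N *m N = N ^+ 2 by rewrite [RHS]expr2 mulmxE.
have NNN : N ^+ 2 *m N = N ^+ 3 by rewrite [RHS]exprSr mulmxE.
have e1 : v *m N *m N = v *m N ^+ 2 by rewrite -mulmxA NN.
have e2 : v *m N ^+ 2 *m N = 0 by rewrite -mulmxA NNN N3 mulmx0.
have e3 : v *m N ^+ 2 *m N ^+ 2 = 0 by rewrite -NN mulmxA e2 mul0mx.
have e4 : v *m N *m N ^+ 2 = 0 by rewrite -{1}NN mulmxA e1 e2.
set w1 := v *m N in e1 e4 *; set w2 := v *m N ^+ 2 in Hv e1 e2 e3 *.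
have e0 : v *m N = w1 by [].
have e5 : v *m N ^+ 2 = w2 by [].
clearbody w1 w2.
pose Q : 'M[K]_3 := \matrix_(k < 3) nth 0 [:: v; -(w1 + w2); - w2] k.
exists Q.
  rewrite -row_free_unit; apply: inj_row_free => u.
  rewrite mulmx_sum_row !big_ord_recr big_ord0 /= add0r !rowK /= w30 w31 w32 => Hu.
  have h0 : u 0 0 = 0.
    have := congr1 (fun M => M *m N ^+ 2) Hu.
    rewrite /= mul0mx !mulmxDl -!scalemxAl !mulNmx !mulmxDl e5 e3 e4 addr0 oppr0.
    rewrite !scaler0 !addr0 => /eqP; rewrite scalemx_eq0 (negbTE Hv) orbF.
    by move/eqP.
  have h1 : u 0 i1 = 0.
    have := congr1 (fun M => M *m N) Hu.
    rewrite /= h0 scale0r add0r mul0mx !mulmxDl -!scalemxAl !mulNmx !mulmxDl e1 e2 addr0.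
    rewrite oppr0 scaler0 addr0 scalerN => /eqP; rewrite oppr_eq0 scalemx_eq0 (negbTE Hv) orbF.
    by move/eqP.
  have h2 : u 0 i2 = 0.
    move: Hu; rewrite h0 h1 !scale0r !add0r scalerN => /eqP.
    by rewrite oppr_eq0 scalemx_eq0 (negbTE Hv) orbF => /eqP.
  apply/rowP => j; rewrite mxE; case: j => [[|[|[|?]]] Hj] //.
  - by rewrite -h0; congr (u 0 _); apply: val_inj.
  - by rewrite -h1; congr (u 0 _); apply: val_inj.
  - by rewrite -h2; congr (u 0 _); apply: val_inj.
apply/row_matrixP => k.
case: k => [[|[|[|?]]] Hk] //; rewrite row_mul [RHS]row_mul [RHS]mulmx_sum_row.
all: rewrite !big_ord_recr big_ord0 /= add0r !rowK w30 w31 w32 /N0 !mxE /=.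
all: rewrite ?mulNmx ?mulmxDl ?e0 ?e1 ?e2 ?expr1n ?subrr ?subr0 ?addr0 ?scale0r ?add0r.
all: rewrite ?scale1r ?scaleN1r ?opprK ?oppr0 //.
by rewrite addrK.
Qed.

Lemma sigma_add (c d : K * K) : sigma (c + d) = sigma c *m sigma d.
Proof.
apply/matrixP => i j; rewrite !mxE !big_ord_recr big_ord0 /= !mxE /=.
case: c d => [c1 c2] [d1 d2] /=.
case: i => [[|[|[|?]]] Hi] //=; case: j => [[|[|[|?]]] Hj] //=; try ring.
have h3 : (3%:R : K) = 0 by exact: pcharf0 hK.
apply/eqP; rewrite -subr_eq0; apply/eqP.
transitivity (3%:R * (c1 * d1) : K); first ring.
by rewrite h3 mul0r.
Qed.

Lemma sigma0 : sigma (0 : K * K) = 1.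
Proof.
apply/matrixP => i j; rewrite !mxE /=.
case: i => [[|[|[|?]]] Hi] //=; case: j => [[|[|[|?]]] Hj] //=; rewrite ?expr0n /=; ring.
Qed.

Lemma sigmaX (c : K * K) n : sigma (c *+ n) = sigma c ^+ n.
Proof.
elim: n => [|n IH]; first by rewrite mulr0n sigma0 expr0.
by rewrite mulrS sigma_add IH exprS mulmxE.
Qed.

Lemma sigma_pr (b : K) : b != 0 -> pseudo_reflection (sigma (0, b)).
Proof.
move=> hb; rewrite /pseudo_reflection /fixdim mxrank_ker.
have -> : sigma (0, b) - 1%:M = b *: delta_mx 0 i2.
  apply/matrixP => i j; rewrite !mxE /=.
  by case: i => [[|[|[|?]]] Hi] //=; case: j => [[|[|[|?]]] Hj] //=; ring.
by rewrite mxrank_scale_nz // mxrank_delta.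
Qed.
Lemma commN0 (M : 'M[K]_3) : N0 *m M = M *m N0 ->
  [/\ M i2 ord0 = 0, M i2 i1 = 0, M i1 ord0 = 0,
      M i2 i2 = M ord0 ord0 & M i1 i1 = M ord0 ord0 /\ M ord0 i1 = - M i1 i2].
Proof.
move=> E.
have F : forall i j, (N0 *m M) i j = (M *m N0) i j by move=> i j; rewrite E.
have G : forall i j, \sum_k N0 i k * M k j = \sum_k M i k * N0 k j.
  by move=> i j; have := F i j; rewrite !mxE.
move: (G i1 ord0) (G i2 i2) (G i1 i1) (G i1 i2) (G ord0 i1) (G ord0 i2).
rewrite !big_ord_recr !big_ord0 /= !w30 !w31 !w32 /N0 !mxE /=.
rewrite ?expr1n ?subrr ?subr0 ?sub0r ?mul0r ?mulr0 ?add0r ?addr0 ?mul1r ?mulr1 ?mulN1r ?mulrN1 ?addr0.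
move=> e1 e2 e3 e4 e5 e6.
have f2 : M i2 i1 = 0 by rewrite e1 add0r in e2.
have f3 : M i1 ord0 = 0 by apply/eqP; rewrite -oppr_eq0 -e3 f2.
have f4 : M i2 i2 = M i1 i1 by rewrite e4 f3 add0r.
have f5 : M i1 i1 = M ord0 ord0 by apply: oppr_inj; rewrite -e5 f2 addr0.
split => //; first by rewrite f4.
split => //; apply: (addrI (M ord0 ord0)); rewrite -e6 f4 f5; ring.
Qed.
Lemma o0 (H : (0 < 3)%N) : Ordinal H = ord0. Proof. exact: val_inj. Qed.
Lemma o1 (H : (1 < 3)%N) : Ordinal H = i1. Proof. exact: val_inj. Qed.
Lemma o2 (H : (2 < 3)%N) : Ordinal H = i2. Proof. exact: val_inj. Qed.

Lemma comm_sigma (M : 'M[K]_3) : N0 *m M = M *m N0 -> \det M = 1 ->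
  M = sigma (M i1 i2, M ord0 i2 - M i1 i2 ^+ 2).
Proof.
move=> E D; have [f1 f2 f3 f4 [f5 f6]] := commN0 M E.
have trig : is_trig_mx M^T.
  apply/is_trig_mxP => i j; rewrite mxE.
  by case: i => [[|[|[|?]]] Hi] //=; case: j => [[|[|[|?]]] Hj] //= _; rewrite ?o0 ?o1 ?o2.
move: D; rewrite -det_tr det_trig // !big_ord_recr big_ord0 /= !mxE w30 w31 w32 f4 f5 mul1r.
move=> D.
have a1 : M ord0 ord0 = 1.
  have := pFrobenius_autB_comm hK (commr1 (M ord0 ord0)).
  rewrite !pFrobenius_autE expr1n.
  have -> : M ord0 ord0 ^+ 3 = 1 by rewrite -D !exprS expr0 mulr1 mulrA.
  by rewrite subrr => /eqP; rewrite expf_eq0 /= subr_eq0 => /eqP.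
apply/matrixP => i j; rewrite !mxE /=.
case: i => [[|[|[|?]]] Hi] //=; case: j => [[|[|[|?]]] Hj] //=; rewrite ?o0 ?o1 ?o2 //.
- ring.
- by rewrite f5 a1.
- by rewrite f4 a1.
Qed.
End S.

Lemma pair_muln (A B : zmodType) (a : A) (b : B) n : (a, b) *+ n = (a *+ n, b *+ n).
Proof. by elim: n => [|n IH] //; rewrite !mulrS IH. Qed.

Lemma mulz3 (V : zmodType) (c : V) (h3 : c *+ 3 = 0) (z : int) :
  c *~ z = c *+ `|(z %% 3)%Z|%N.
Proof.
rewrite {1}(divz_eq z 3) mulrzDr (mulrC (z %/ 3)%Z) mulrzA -pmulrn h3 mul0rz add0r pmulrn.
by rewrite gez0_abs // modz_ge0.
Qed.

Arguments mulz3 {V c}.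
Arguments pair_muln {A B}.

Section Conj.
Variable K : fieldType.
Variable Q : 'M[K]_3.
Hypothesis uQ : Q \in unitmx.
Definition cj (X : 'M[K]_3) := Q *m X *m invmx Q.

Lemma cjM A B : cj (A *m B) = cj A *m cj B.
Proof. by rewrite /cj !mulmxA mulmxKV. Qed.

Lemma cj1 : cj 1%:M = 1%:M.
Proof. by rewrite /cj mulmx1 mulmxV. Qed.

Lemma cjX A n : cj (A ^+ n) = cj A ^+ n.
Proof.
elim: n => [|n IH]; first by rewrite !expr0 cj1.
by rewrite !exprS -!mulmxE cjM IH.
Qed.

Lemma cj_inj1 X : cj X = 1%:M -> X = 1%:M.
Proof.
move=> h; have := congr1 (fun M => invmx Q *m M *m Q) h.
by rewrite /cj /= !mulmxA mulVmx // mul1mx mulmxKV // mulmx1 mulVmx.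
Qed.

Lemma rank_cj A : \rank (cj A) = \rank A.
Proof.
rewrite /cj mxrankMfree; last by rewrite row_free_unit unitmx_inv.
by rewrite eqmxMfull // row_full_unit.
Qed.

Lemma fixdim_cj X : fixdim (cj X) = fixdim X.
Proof.
rewrite /fixdim !mxrank_ker.
have -> : cj X - 1%:M = cj (X - 1%:M) by rewrite /cj mulmxBr mulmxBl mulmx1 mulmxV.
by rewrite rank_cj.
Qed.

Lemma det_cj X : \det (cj X) = \det X.
Proof.
have u : \det Q \is a GRing.unit by rewrite -unitmxE.
by rewrite /cj !det_mulmx det_inv mulrC mulrA mulVr // mul1r.
Qed.
End Conj.
Arguments N0 {K}. Arguments cj {K}. Arguments cjM {K Q}. Arguments cjX {K Q}.
Arguments cj_inj1 {K Q}. Arguments fixdim_cj {K Q}. Arguments det_cj {K Q}.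
Arguments sigma_add {K}. Arguments sigmaX {K}. Arguments sigma_pr {K}. Arguments sigma0 {K}.

Theorem proposition3p1 (K : closedFieldType) (hK : (3 \in [pchar K])%N)
  (iota : ('Z_3 * 'Z_3)%type -> 'M[K]_3)
  (hhom : forall x y, iota (x + y) = iota x *m iota y)
  (hSL : forall x, \det (iota x) = 1)
  (hinj : injective iota)
  (hsmall : small (fun g => exists x, g = iota x)) :
  exists (a b : K), ~ in_prime_field a /\
    exists2 P : 'M[K]_3, P \in unitmx &
      forall M : 'M[K]_3,
        (exists2 c, U_ab a b c & M = sigma c) <->
        (exists x, M = invmx P *m iota x *m P).
Proof.
pose z1 : 'Z_3 * 'Z_3 := (1, 0). pose z2 : 'Z_3 * 'Z_3 := (0, 1).
have iota0 : iota 0 = 1%:M.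
  have u0 : iota 0 \in unitmx by rewrite unitmxE hSL unitr1.
  have e := hhom 0 0; rewrite addr0 in e.
  have := congr1 (mulmx (invmx (iota 0))) e.
  by rewrite mulKmx // mulVmx // => <-.
have iotaX : forall x n, iota (x *+ n) = iota x ^+ n.
  move=> x; elim=> [|n IH]; first by rewrite mulr0n iota0 expr0.
  by rewrite mulrS hhom IH exprS mulmxE.
have decomp : forall x : 'Z_3 * 'Z_3, x = z1 *+ x.1 + z2 *+ x.2.
  case=> x1 x2; rewrite /z1 /z2 !pair_muln !mul0rn /=.
  change ((x1, x2) = (x1%:R + 0, 0 + x2%:R)).
  by rewrite add0r addr0 !natr_Zp.
have gen : forall x, iota x = iota z1 ^+ x.1 *m iota z2 ^+ x.2.
  by move=> x; rewrite {1}(decomp x) hhom !iotaX.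
have g3 : iota z1 ^+ 3 = 1.
  have -> : 1 = iota 0 by rewrite iota0.
  rewrite -iotaX; congr iota; rewrite /z1 pair_muln mul0rn.
  by apply/eqP.
pose N := iota z1 - 1%:M.
have N3 : N ^+ 3 = 0 by rewrite /N idmxE cube_sub1 // g3 subrr.
have z1ne0 : z1 != 0 by apply/eqP.
have N2 : N ^+ 2 != 0.
  have fix2 := hsmall (iota z1) (ex_intro _ z1 erefl).
  rewrite /pseudo_reflection /fixdim mxrank_ker -/N in fix2.
  have r3 := rank_leq_row N.
  have r0 : \rank N != 0%N.
    rewrite mxrank_eq0 /N subr_eq0; apply/eqP => h.
    by move/eqP: z1ne0; apply; apply: hinj; rewrite h iota0.
  have r3' : \rank N != 3%N.
    apply/eqP => h.
    have fr : row_free N by rewrite /row_free h.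
    have : \rank (N *m N *m N) = 3%N by rewrite !mxrankMfree.
    have -> : N *m N *m N = N ^+ 3 by rewrite [RHS]exprSr [in RHS]expr2 !mulmxE.
    by rewrite N3 mxrank0.
  apply/eqP => h.
  have : (N <= kermx N)%MS.
    by apply/sub_kermxP; rewrite (_ : N *m N = N ^+ 2) // [RHS]expr2 mulmxE.
  move/mxrankS; rewrite mxrank_ker => hle.
  move: fix2 r3 r0 r3' hle; set r := \rank N => fix2 r3 r0 r3' hle.
  lia.
have [Q uQ HQ] := @jordan K N N3 N2.
have cjg : cj Q (iota z1) = sigma ((1 : K), (0 : K)).
  have -> : iota z1 = N + 1%:M by rewrite /N subrK.
  rewrite /cj mulmxDr mulmxDl HQ mulmx1 mulmxK // mulmxV //.
  by rewrite /N0 idmxE subrK.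
have hc : N0 *m cj Q (iota z2) = cj Q (iota z2) *m N0.
  have c0 : iota z1 *m iota z2 = iota z2 *m iota z1 by rewrite -!hhom addrC.
  have := congr1 (cj Q) c0; rewrite !(cjM uQ) cjg => c1.
  by rewrite /N0 mulmxBl mulmxBr c1 -idmxE mul1mx mulmx1.
have dh : \det (cj Q (iota z2)) = 1 by rewrite det_cj // hSL.
have hs := @comm_sigma K hK (cj Q (iota z2)) hc dh.
move: hs; set a := cj Q (iota z2) i1 i2; set b := _ - _ => hs.
have Key : forall x, cj Q (iota x) = sigma (((1 : K), (0 : K)) *+ x.1 + (a, b) *+ x.2).
  move=> x; rewrite gen (cjM uQ) !(cjX uQ) cjg hs.
  by rewrite (sigma_add hK) !(sigmaX hK).
have Key2 : forall m n, cj Q (iota (z1 *+ m + z2 *+ n)) =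
    sigma (((1 : K), (0 : K)) *+ m + (a, b) *+ n).
  move=> m n; rewrite hhom (cjM uQ) !iotaX !(cjX uQ) cjg hs.
  by rewrite (sigma_add hK) !(sigmaX hK).
have Key2u : forall m n, Q *m iota (z1 *+ m + z2 *+ n) *m invmx Q =
    sigma (((1 : K), (0 : K)) *+ m + (a, b) *+ n) := Key2.
have Keyu : forall x, Q *m iota x *m invmx Q =
    sigma (((1 : K), (0 : K)) *+ x.1 + (a, b) *+ x.2) := Key.
have h31 : (1 : K) *+ 3 = 0 by exact: pcharf0 hK.
have h3 : (3%:R : K) = 0 by exact: pcharf0 hK.
exists a, b; split.
- case=> z az.
  have am : a = (`|(z %% 3)%Z|%N)%:R by rewrite az (mulz3 h31).
  move: am; set m := `|(z %% 3)%Z|%N => am.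
  have hm : (m <= 3)%N.
    have := @ltz_pmod z 3 isT; have := @modz_ge0 z 3 isT; rewrite /m; lia.
  pose x := z1 *+ (3 - m) + z2.
  have kx : cj Q (iota x) = sigma ((0:K), b).
    rewrite /x -[z2]mulr1n Key2; congr sigma; rewrite pair_muln mulr1n mul0rn.
    change ((1 *+ (3 - m) + a, 0 + b) = ((0 : K), b)).
    by rewrite add0r am -natrD subnK // h3.
  have xne0 : x != 0.
    apply/eqP => /(congr1 snd); rewrite /x /z1 /z2.
    have -> : forall (u v : 'Z_3 * 'Z_3), (u + v).2 = u.2 + v.2 by [].
    by rewrite pair_muln /= mul0rn add0r => /eqP; rewrite oner_eq0.
  have hb : b != 0.
    apply/eqP => b0; move: kx; rewrite b0 (_ : ((0:K), (0:K)) = 0) // sigma0 -idmxE.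
    move=> /(cj_inj1 uQ) h; move/eqP: xne0; apply; apply: hinj; by rewrite h iota0.
  have := hsmall (iota x) (ex_intro _ x erefl).
  rewrite /pseudo_reflection -(fixdim_cj uQ) kx.
  by move: (sigma_pr b hb); rewrite /pseudo_reflection => ->.
- exists (invmx Q); first by rewrite unitmx_inv.
  move=> M; rewrite invmxK; split.
  + case=> c [i [j ->]] ->.
    exists (z1 *+ `|(i %% 3)%Z|%N + z2 *+ `|(j %% 3)%Z|%N).
    have h10 : ((1 : K), (0 : K)) *+ 3 = 0.
      by rewrite pair_muln mul0rn h31; reflexivity.
    have hab : (a, b) *+ 3 = 0.
      by rewrite pair_muln -[a *+ 3]mulr_natr -[b *+ 3]mulr_natr h3 !mulr0; reflexivity.
    by rewrite Key2u (mulz3 h10) (mulz3 hab).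
  + case=> x ->.
    exists (((1 : K), (0 : K)) *~ (x.1 : nat) + (a, b) *~ (x.2 : nat)).
      by exists (x.1 : nat)%:Z, (x.2 : nat)%:Z.
    by rewrite Keyu -!pmulrn.
Qed.
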